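(* For every elementary pair $(p,q)$ of partial isomorphisms of $\mathbb{Q}$ there is a triple $(p',q',w)$ that liberates $p$ in $(p,q)$, and there is a triple that liberates $q$ in $(p,q)$.
   Context: A partial isomorphism of $\mathbb{Q}$ is an order-preserving bijection $p$ between finite subsets $\mathrm{dom}(p),\mathrm{ran}(p)$ of $\mathbb{Q}$; $p'\supseteq p$ means $p'$ extends $p$; $\mathrm{Fix}(p)=\{c\in\mathrm{dom}(p):p(c)=c\}$. An open interval $(a,b)$ is $p$-increasing if $a,b\in\mathrm{dom}(p)$, $p(a)=a$, $p(b)=b$ and $p(c)>c$ for all $c\in\mathrm{dom}(p)\cap(a,b)$; $p$-decreasing likewise with $p(c)<c$; $p$-monotone means either. Writing $\mathrm{dom}(p)=\{a_0<\dots<a_n\}$, $p$ is informative if $p(a_0)=a_0$, $p(a_n)=a_n$ and there are indices $0=i_0<\dots<i_r=n$ with $p(a_{i_k})=a_{i_k}$ and each $(a_{i_k},a_{i_{k+1}})$ $p$-monotone; then $\mathrm{Ess}(p)=(\mathrm{dom}(p)\cup\mathrm{ran}(p))\setminus\{a_0,a_n\}$. A pair $(p,q)$ is elementary if $p,q$ are informative, $\min\mathrm{dom}(p)=\min\mathrm{dom}(q)$, $\max\mathrm{dom}(p)=\max\mathrm{dom}(q)$, and $\mathrm{Fix}(p)\cap\mathrm{Fix}(q)$ consists only of this min and max. Words: $F(s,t)$ free group; for reduced $w=t^{n_k}s^{m_k}\cdots t^{n_1}s^{m_1}$, $w(p,q)(c)=q^{n_k}p^{m_k}\cdots q^{n_1}p^{m_1}(c)$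 when defined (rightmost letter acts first); ''$w=t^nv$'' means the product is reduced. Liberation: for an elementary pair $(p,q)$, a triple $(p',q',w)$ with $p'\supseteq p$, $q'\supseteq q$ partial isomorphisms and $w$ reduced liberates $p$ in $(p,q)$ if: (i) $p',q'$ are informative; (ii) $\min\mathrm{dom}(p')=\min\mathrm{dom}(p)$, $\min\mathrm{dom}(q')=\min\mathrm{dom}(q)$, $\max\mathrm{dom}(p')=\max\mathrm{dom}(p)$, $\max\mathrm{dom}(q')=\max\mathrm{dom}(q)$; (iii) $w=t^nv$ with $n\neq0$; (iv) $w(p',q')(c)$ is defined for all $c\in\mathrm{Ess}(p)\cup\mathrm{Ess}(q)$ and $w(p',q')(\min(\mathrm{Ess}(p)\cup\mathrm{Ess}(q)))>\max\mathrm{Ess}(p')$; (v) there is an open interval $J$ whose right endpoint is $\max\mathrm{dom}(q)$, with $w(p',q')(c)\in J$ for all $c\in\mathrm{Ess}(p)\cup\mathrm{Ess}(q)$, and $J$ is $q'$-increasing if $n>0$ and $q'$-decreasing if $n<0$. The triple liberates $q$ in $(p,q)$ if the same holds with the roles of $p,q$ and of $s,t$ interchanged (so $w=s^nv$, $n\ne0$, the bound in (iv) is $>\max\mathrm{Ess}(q')$, and $J$ has right endpoint $\max\mathrm{dom}(p)$ and is $p'$-increasing/decreasing according to the sign of $n$). *)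

(* Defs.v *)
From HB Require Import structures.
From mathcomp Require Import all_boot all_order all_algebra.
Set Implicit Arguments. Unset Strict Implicit. Unset Printing Implicit Defensive.
Import Order.TTheory GRing.Theory Num.Theory.
Local Open Scope ring_scope.

(* A partial isomorphism of Q is given by its (finite) graph: a list of pairs
   (c, p(c)).  The condition (x.1 < y.1) = (x.2 < y.2) for all pairs says
   exactly that the graph is that of an order-preserving bijection between
   the finite sets dom and ran (it forces functionality and injectivity). *)
Definition is_pisom (g : seq (rat * rat)) : Prop :=
  forall x y, x \in g -> y \in g -> (x.1 < y.1) = (x.2 < y.2).

Record pisom := PIsom { graph : seq (rat * rat); graphP : is_pisom graph }.

Definition dom (p : pisom) : seq rat := [seq x.1 | x <- graph p].
Definition ran (p : pisom) : seq rat := [seq x.2 | x <- graph p].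

Definition app (p : pisom) (c : rat) : option rat :=
  ohead [seq x.2 | x <- graph p & x.1 == c].
Definition appinv (p : pisom) (c : rat) : option rat :=
  ohead [seq x.1 | x <- graph p & x.2 == c].

Definition extends (p' p : pisom) : Prop := {subset graph p <= graph p'}.

Definition isfix (p : pisom) (c : rat) : Prop := app p c = Some c.

(* min / max of the domain (only meaningful for nonempty domains;
   all partial isomorphisms below to which they are applied are informative,
   hence have nonempty domain) *)
Definition mindom (p : pisom) : rat := foldr Order.min (head 0 (dom p)) (dom p).
Definition maxdom (p : pisom) : rat := foldr Order.max (head 0 (dom p)) (dom p).

Definition p_increasing (p : pisom) (a b : rat) : Prop :=
  [/\ isfix p a, isfix p b &
      forall x, x \in graph p -> a < x.1 < b -> x.1 < x.2].
Definition p_decreasing (p : pisom) (a b : rat) : Prop :=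
  [/\ isfix p a, isfix p b &
      forall x, x \in graph p -> a < x.1 < b -> x.2 < x.1].
Definition p_monotone (p : pisom) (a b : rat) : Prop :=
  p_increasing p a b \/ p_decreasing p a b.

Definition informative (p : pisom) : Prop :=
  [/\ dom p != [::], isfix p (mindom p), isfix p (maxdom p) &
    exists fs : seq rat,
      [/\ fs != [::], sorted <%R fs, head 0 fs = mindom p /\ last 0 fs = maxdom p,
          (forall c, c \in fs -> isfix p c) &
          (forall i, (i.+1 < size fs)%N -> p_monotone p (nth 0 fs i) (nth 0 fs i.+1))]].

Definition Ess (p : pisom) : seq rat :=
  [seq c <- dom p ++ ran p | (c != mindom p) && (c != maxdom p)].

Definition elementary (p q : pisom) : Prop :=
  [/\ informative p, informative q, mindom p = mindom q, maxdom p = maxdom q &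
      forall c, isfix p c -> isfix q c -> c = mindom p \/ c = maxdom p].

(* Words of the free group F(s,t): lists of letters s^{±1}, t^{±1};
   the boolean is true for exponent +1, false for exponent -1. *)
Inductive gen := gs | gt.
Definition letter := (gen * bool)%type.
Definition word := seq letter.

Definition reduced (w : word) : Prop :=
  forall i, (i.+1 < size w)%N ->
    ~ ((nth (gs, true) w i).1 = (nth (gs, true) w i.+1).1 /\
       (nth (gs, true) w i).2 <> (nth (gs, true) w i.+1).2).

Definition act (p q : pisom) (l : letter) (x : rat) : option rat :=
  match l with
  | (gs, true) => app p x
  | (gs, false) => appinv p x
  | (gt, true) => app q x
  | (gt, false) => appinv q x
  end.

(* w(p,q)(c): the rightmost letter acts first; None = undefined *)
Definition eval (p q : pisom) (w : word) (c : rat) : option rat :=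
  foldr (fun l oc => match oc with Some x => act p q l x | None => None end)
        (Some c) w.

(* (p',q',w) liberates p in (p,q).  Writing w = t^n v (reduced), the sign of
   n is the sign of the leftmost letter of w, which is t^{b} (b = true iff n>0). *)
Definition liberates_p (p q p' q' : pisom) (w : word) : Prop :=
  let E := Ess p ++ Ess q in
  [/\ extends p' p /\ extends q' q, reduced w,
      informative p' /\ informative q',
      [/\ mindom p' = mindom p, mindom q' = mindom q,
                     maxdom p' = maxdom p & maxdom q' = maxdom q] &
      exists (b : bool) (v : word), w = (gt, b) :: v /\
      [/\ (forall c, c \in E -> exists d, eval p' q' w c = Some d),
        (forall m, m \in E -> (forall c, c \in E -> m <= c) ->
           forall d, eval p' q' w m = Some d -> forall x, x \in Ess p' -> x < d) &
      exists a : rat,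
        (forall c d, c \in E -> eval p' q' w c = Some d -> a < d < maxdom q) /\
        (if b then p_increasing q' a (maxdom q) else p_decreasing q' a (maxdom q))]].

Definition liberates_q (p q p' q' : pisom) (w : word) : Prop :=
  let E := Ess p ++ Ess q in
  [/\ extends p' p /\ extends q' q, reduced w,
      informative p' /\ informative q',
      [/\ mindom p' = mindom p, mindom q' = mindom q,
          maxdom p' = maxdom p & maxdom q' = maxdom q] &
      exists (b : bool) (v : word), w = (gs, b) :: v /\
      [/\ (forall c, c \in E -> exists d, eval p' q' w c = Some d),
        (forall m, m \in E -> (forall c, c \in E -> m <= c) ->
           forall d, eval p' q' w m = Some d -> forall x, x \in Ess q' -> x < d) &
      exists a : rat,
        (forall c d, c \in E -> eval p' q' w c = Some d -> a < d < maxdom p) /\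
        (if b then p_increasing p' a (maxdom p) else p_decreasing p' a (maxdom p))]].

(* Main.v *)
Require Import Defs.
From mathcomp Require Import all_boot all_order all_algebra.
Set Implicit Arguments. Unset Strict Implicit. Unset Printing Implicit Defensive.
Import Order.TTheory GRing.Theory Num.Theory.
Local Open Scope ring_scope.

Lemma pis (g : pisom) u v : u \in graph g -> v \in graph g -> (u.1 < v.1) = (u.2 < v.2).
Proof. by move=> hu hv; exact: (graphP hu hv). Qed.

Lemma pis_eq (g : pisom) u v : u \in graph g -> v \in graph g -> (u.1 == v.1) = (u.2 == v.2).
Proof.
move=> hu hv; have h1 := pis hu hv; have h2 := pis hv hu.
by rewrite !eq_le !leNgt h1 h2.
Qed.

Lemma pis_le (g : pisom) u v : u \in graph g -> v \in graph g -> (u.1 <= v.1) = (u.2 <= v.2).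
Proof. by move=> hu hv; rewrite !leNgt (pis hv hu). Qed.

Lemma ohead_in (s : seq (rat * rat)) c d :
  ohead [seq x.2 | x <- s & x.1 == c] = Some d -> (c, d) \in s.
Proof.
elim: s => //= [[a b] s IH] /=.
case: ifP => /= [/eqP -> [<-]|_ /IH]; first exact: mem_head.
by rewrite in_cons => ->; rewrite orbT.
Qed.

Lemma ohead_some (s : seq (rat * rat)) c d : (c, d) \in s ->
  exists d', ohead [seq x.2 | x <- s & x.1 == c] = Some d'.
Proof.
elim: s => //= [[a b] s IH].
rewrite in_cons; case: ifP => /= [_ _|/eqP ne /orP[/eqP [e _]|/IH //]]; first by eauto.
by case: ne.
Qed.

Lemma app_in g c d : app g c = Some d -> (c, d) \in graph g.
Proof. exact: ohead_in. Qed.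

Lemma in_app g c d : (c, d) \in graph g -> app g c = Some d.
Proof.
move=> h; have [d' e] := ohead_some h.
have h' := ohead_in e; rewrite /app e.
by have := pis_eq h h' => /=; rewrite eqxx => /esym/eqP ->.
Qed.

Definition swp (x : rat * rat) := (x.2, x.1).

Lemma inv_proof (g : pisom) : is_pisom (map swp (graph g)).
Proof. by move=> x y /mapP[u hu ->] /mapP[v hv ->] /=; rewrite (pis hu hv). Qed.

Definition inv (g : pisom) : pisom := PIsom (@inv_proof g).

Lemma appinvE g c : appinv g c = app (inv g) c.
Proof. by rewrite /appinv /app /= filter_map -map_comp. Qed.

Lemma mem_inv g u : (u \in graph (inv g)) = (swp u \in graph g).
Proof.
apply/mapP/idP => [[v hv ->]|h]; first by case: v hv.
by exists (swp u) => //; case: u h.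
Qed.

Lemma inv_inv_mem g u : (u \in graph (inv (inv g))) = (u \in graph g).
Proof. by rewrite !mem_inv; case: u. Qed.

Lemma fix_in g c : isfix g c -> (c, c) \in graph g.
Proof. exact: app_in. Qed.

Lemma in_fix g c : (c, c) \in graph g -> isfix g c.
Proof. exact: in_app. Qed.

Lemma fix_lt g c v : isfix g c -> v \in graph g ->
  ((c < v.1) = (c < v.2)) /\ ((v.1 < c) = (v.2 < c)).
Proof. move/fix_in=> hc hv; split; [exact: (pis hc hv) | exact: (pis hv hc)]. Qed.

Lemma fix_le g c v : isfix g c -> v \in graph g ->
  ((c <= v.1) = (c <= v.2)) /\ ((v.1 <= c) = (v.2 <= c)).
Proof. move/fix_in=> hc hv; split; [exact: (pis_le hc hv) | exact: (pis_le hv hc)]. Qed.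

Definition Good (g : pisom) (fs : seq rat) :=
  [/\ sorted <%R fs, fs != [::], (forall c, c \in fs -> isfix g c),
      (forall u, u \in graph g -> head 0 fs <= u.1 <= last 0 fs) &
      (forall i, (i.+1 < size fs)%N -> p_monotone g (nth 0 fs i) (nth 0 fs i.+1))].

Lemma head_in (fs : seq rat) : fs != [::] -> head 0 fs \in fs.
Proof. by case: fs => // a s _; exact: mem_head. Qed.

Lemma last_in (fs : seq rat) : fs != [::] -> last 0 fs \in fs.
Proof. by case: fs => // a s _ /=; exact: mem_last. Qed.

Lemma Good_fixm g fs : Good g fs -> isfix g (head 0 fs).
Proof. by case=> _ ne hf _ _; apply: hf; exact: head_in. Qed.

Lemma Good_fixM g fs : Good g fs -> isfix g (last 0 fs).
Proof. by case=> _ ne hf _ _; apply: hf; exact: last_in. Qed.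

Lemma Good_bnd g fs u : Good g fs -> u \in graph g ->
  [/\ head 0 fs <= u.1, u.1 <= last 0 fs, head 0 fs <= u.2 & u.2 <= last 0 fs].
Proof.
move=> G hu; have [_ _ _ hb _] := G; have /andP[h1 h2] := hb _ hu.
have [e1 _] := fix_le (Good_fixm G) hu; have [_ e2] := fix_le (Good_fixM G) hu.
by split => //; rewrite -?e1 -?e2.
Qed.

Lemma inc_dec_inv g c d : p_increasing g c d -> p_decreasing (inv g) c d.
Proof.
case=> hc hd hi; split.
- by apply: in_fix; rewrite mem_inv; exact: fix_in.
- by apply: in_fix; rewrite mem_inv; exact: fix_in.
move=> u; rewrite mem_inv => hu /andP[h1 h2].
have [e1 _] := fix_lt hc hu; have [_ e2] := fix_lt hd hu.
by apply: hi hu _; rewrite /= e1 e2 h1 h2.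
Qed.

Lemma dec_inc_inv g c d : p_decreasing g c d -> p_increasing (inv g) c d.
Proof.
case=> hc hd hi; split.
- by apply: in_fix; rewrite mem_inv; exact: fix_in.
- by apply: in_fix; rewrite mem_inv; exact: fix_in.
move=> u; rewrite mem_inv => hu /andP[h1 h2].
have [e1 _] := fix_lt hc hu; have [_ e2] := fix_lt hd hu.
by apply: hi hu _; rewrite /= e1 e2 h1 h2.
Qed.

Lemma Good_inv g fs : Good g fs -> Good (inv g) fs.
Proof.
move=> G; have [s ne hf hb hm] := G; split => //.
- by move=> c /hf /fix_in h; apply: in_fix; rewrite mem_inv.
- by move=> u; rewrite mem_inv => /(Good_bnd G) [_ _ -> ->].
move=> i /hm [/inc_dec_inv|/dec_inc_inv] h; by [right|left].
Qed.

Lemma nth_le (fs : seq rat) i j : sorted <%R fs -> (i <= j)%N -> (j < size fs)%N ->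
  nth 0 fs i <= nth 0 fs j.
Proof.
move=> s hij hj; rewrite (lt_sorted_leq_nth 0 s) //.
by rewrite inE (leq_ltn_trans hij hj).
Qed.

Lemma nth_lt (fs : seq rat) i j : sorted <%R fs -> (i < j)%N -> (j < size fs)%N ->
  nth 0 fs i < nth 0 fs j.
Proof.
move=> s hij hj; rewrite (lt_sorted_ltn_nth 0 s) //.
by rewrite inE (ltn_trans hij hj).
Qed.

Lemma gap (fs : seq rat) j f : sorted <%R fs -> (j.+1 < size fs)%N -> f \in fs ->
  f <= nth 0 fs j \/ nth 0 fs j.+1 <= f.
Proof.
move=> s hj hf; rewrite -(nth_index 0 hf); have hk := index_mem f fs; rewrite hf in hk.
case: (leqP (index f fs) j) => hkj; [left|right]; apply: nth_le => //.
exact: ltnW.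
Qed.

Lemma int_uniq (fs : seq rat) i j x : sorted <%R fs -> (i.+1 < size fs)%N -> (j.+1 < size fs)%N ->
  nth 0 fs i < x < nth 0 fs i.+1 -> nth 0 fs j < x < nth 0 fs j.+1 -> i = j.
Proof.
move=> s hi hj /andP[a1 a2] /andP[b1 b2].
case: (ltngtP i j) => // hij.
- have := nth_le s hij (ltnW hj) => h.
  by have := lt_trans b1 a2; rewrite ltNge h.
- have := nth_le s hij (ltnW hi) => h.
  by have := lt_trans a1 b2; rewrite ltNge h.
Qed.

Lemma find_int (fs : seq rat) x : sorted <%R fs -> head 0 fs <= x -> x < last 0 fs ->
  exists j, (j.+1 < size fs)%N /\ nth 0 fs j <= x < nth 0 fs j.+1.
Proof.
elim: fs => [|a s IH] /=; first by move=> _ h1 h2; have := le_lt_trans h1 h2; rewrite ltxx.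
case: s IH => [|b s] IH /=; first by move=> _ h1 h2; have := le_lt_trans h1 h2; rewrite ltxx.
move=> /andP[hab hs] hax hxl.
case: (ltP x b) => hxb; first by exists 0%N; rewrite hax hxb.
have [j [hj hx]] := IH hs hxb hxl.
by exists j.+1.
Qed.

Lemma Good_int g fs x : Good g fs -> head 0 fs < x -> x < last 0 fs -> x \notin fs ->
  exists j, (j.+1 < size fs)%N /\ nth 0 fs j < x < nth 0 fs j.+1.
Proof.
move=> [s ne _ _ _] h1 h2 hn; have [j [hj /andP[a b]]] := find_int s (ltW h1) h2.
exists j; split => //; rewrite b andbT lt_neqAle a andbT.
apply/eqP => e; move: hn; rewrite -e mem_nth //; exact: ltnW.
Qed.

Lemma Good_fix_in g fs z : Good g fs -> head 0 fs < z -> z < last 0 fs -> isfix g z -> z \in fs.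
Proof.
move=> G h1 h2 hz; apply/negPn/negP => hn.
have [j [hj hx]] := Good_int G h1 h2 hn.
have [_ _ _ _ hm] := G; have zz := fix_in hz.
by case: (hm _ hj) => [[_ _ /(_ _ zz hx)]|[_ _ /(_ _ zz hx)]]; rewrite ltxx.
Qed.

Lemma foldr_min_mem (a : rat) s : foldr Order.min a s \in a :: s.
Proof.
elim: s => [|b s IH] /=; first exact: mem_head.
rewrite /Order.min; case: ifP => _; first by rewrite !inE eqxx orbT.
move: IH; rewrite !inE => /orP[->//|->]; by rewrite !orbT.
Qed.

Lemma foldr_min_le (a : rat) s v : v \in a :: s -> foldr Order.min a s <= v.
Proof.
elim: s v => [|b s IH] v /=; first by rewrite inE => /eqP ->.
have IH' : forall v, v \in a :: s -> foldr Order.min a s <= v by [].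
rewrite /Order.min; case: ifP => hb; rewrite !inE => /orP[/eqP->|/orP[/eqP->|h]].
- by apply: ltW; apply: (lt_le_trans hb); apply: IH'; rewrite mem_head.
- by rewrite lexx.
- by apply: ltW; apply: (lt_le_trans hb); apply: IH'; rewrite inE h orbT.
- exact: IH' _ (mem_head _ _).
- by rewrite leNgt hb.
- by apply: IH'; rewrite inE h orbT.
Qed.

Lemma foldr_max_mem (a : rat) s : foldr Order.max a s \in a :: s.
Proof.
elim: s => [|b s IH] /=; first exact: mem_head.
rewrite /Order.max; case: ifP => _; last by rewrite !inE eqxx orbT.
move: IH; rewrite !inE => /orP[->//|->]; by rewrite !orbT.
Qed.

Lemma foldr_max_ge (a : rat) s v : v \in a :: s -> v <= foldr Order.max a s.
Proof.
elim: s v => [|b s IH] v /=; first by rewrite inE => /eqP ->.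
have IH' : forall v, v \in a :: s -> v <= foldr Order.max a s by [].
rewrite /Order.max; case: ifP => hb; rewrite !inE => /orP[/eqP->|/orP[/eqP->|h]].
- exact: IH' _ (mem_head _ _).
- exact: ltW.
- by apply: IH'; rewrite inE h orbT.
- by apply: (le_trans (IH' _ (mem_head _ _))); rewrite leNgt hb.
- by rewrite lexx.
- by apply: (le_trans (IH' v _)); rewrite ?leNgt ?hb // inE h orbT.
Qed.

Lemma head_mem_cons (s : seq rat) v : s != [::] -> (v \in head 0 s :: s) = (v \in s).
Proof. by case: s => // a s _ /=; rewrite inE; case: eqP => // ->; rewrite mem_head. Qed.

Lemma mindom_le g c : c \in dom g -> mindom g <= c.
Proof.
move=> h; apply: foldr_min_le; rewrite head_mem_cons //.
by apply/eqP => e; rewrite e in h.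
Qed.

Lemma maxdom_ge g c : c \in dom g -> c <= maxdom g.
Proof.
move=> h; apply: foldr_max_ge; rewrite head_mem_cons //.
by apply/eqP => e; rewrite e in h.
Qed.

Lemma mindom_eq g m : m \in dom g -> (forall c, c \in dom g -> m <= c) -> mindom g = m.
Proof.
move=> hm hall; apply: le_anti; rewrite mindom_le //=.
have ne : dom g != [::] by apply/eqP => e; rewrite e in hm.
by apply: hall; have := foldr_min_mem (head 0 (dom g)) (dom g); rewrite head_mem_cons.
Qed.

Lemma maxdom_eq g m : m \in dom g -> (forall c, c \in dom g -> c <= m) -> maxdom g = m.
Proof.
move=> hm hall; apply: le_anti; rewrite maxdom_ge // andbT.
have ne : dom g != [::] by apply/eqP => e; rewrite e in hm.
by apply: hall; have := foldr_max_mem (head 0 (dom g)) (dom g); rewrite head_mem_cons.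
Qed.

Lemma in_dom g u : u \in graph g -> u.1 \in dom g.
Proof. by move=> h; apply/mapP; exists u. Qed.

Lemma in_ran g u : u \in graph g -> u.2 \in ran g.
Proof. by move=> h; apply/mapP; exists u. Qed.

Lemma fix_dom g c : isfix g c -> c \in dom g.
Proof. by move/fix_in/in_dom. Qed.

Lemma Good_mindom g fs : Good g fs -> mindom g = head 0 fs /\ maxdom g = last 0 fs.
Proof.
move=> G; split.
- apply: mindom_eq; first exact/fix_dom/(Good_fixm G).
  by move=> c /mapP[u hu ->]; have [] := Good_bnd G hu.
- apply: maxdom_eq; first exact/fix_dom/(Good_fixM G).
  by move=> c /mapP[u hu ->]; have [] := Good_bnd G hu.
Qed.

Lemma Good_inf g fs : Good g fs -> informative g.
Proof.
move=> G; have [e1 e2] := Good_mindom G; have [s ne hf hb hm] := G.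
split; rewrite ?e1 ?e2.
- by apply/eqP => e; have := fix_dom (Good_fixm G); rewrite e.
- exact: Good_fixm G.
- exact: Good_fixM G.
by exists fs.
Qed.

Lemma inf_Good g : informative g ->
  exists fs, [/\ Good g fs, head 0 fs = mindom g & last 0 fs = maxdom g].
Proof.
case=> ne hm hM [fs [fne s [e1 e2] hf hmono]].
exists fs; split => //; split => // u hu; rewrite e1 e2.
by rewrite mindom_le ?maxdom_ge ?in_dom.
Qed.

Lemma mem_Ess g c : (c \in Ess g) = [&& (c \in dom g ++ ran g), c != mindom g & c != maxdom g].
Proof. by rewrite mem_filter andbC. Qed.

Lemma Ess_bnd g fs c : Good g fs -> c \in Ess g -> head 0 fs < c < last 0 fs.
Proof.
move=> G; have [e1 e2] := Good_mindom G; rewrite mem_Ess e1 e2.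
case/and3P; rewrite mem_cat => /orP[]/mapP[u hu ->] n1 n2;
  have [a1 a2 a3 a4] := Good_bnd G hu;
  by rewrite !lt_neqAle ?a1 ?a2 ?a3 ?a4 eq_sym n1 n2.
Qed.

Definition compat (g : pisom) x y := forall u, u \in graph g ->
  ((u.1 < x) = (u.2 < y)) /\ ((x < u.1) = (y < u.2)).

Lemma add_proof (g : pisom) x y : compat g x y -> is_pisom ((x, y) :: graph g).
Proof.
move=> hc a b; rewrite !inE => /orP[/eqP->|ha] /orP[/eqP->|hb] /=.
- by rewrite !ltxx.
- by have [_ ->] := hc _ hb.
- by have [-> _] := hc _ ha.
- exact: pis ha hb.
Qed.

Definition addp (g : pisom) x y (h : compat g x y) : pisom := PIsom (add_proof h).

Lemma mem_addp g x y (h : compat g x y) u : (u \in graph (addp h)) = (u == (x, y)) || (u \in graph g).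
Proof. by rewrite /= inE. Qed.

Lemma app_addp g x y (h : compat g x y) c : c != x -> app (addp h) c = app g c.
Proof. by rewrite /app /= eq_sym => /negbTE ->. Qed.

Lemma app_addp_x g x y (h : compat g x y) : app (addp h) x = Some y.
Proof. by rewrite /app /= eqxx. Qed.

Lemma fix_addp g x y (h : compat g x y) c : c != x -> isfix g c -> isfix (addp h) c.
Proof. by move=> ne; rewrite /isfix app_addp. Qed.

Lemma inc_addp g x y (h : compat g x y) c d : p_increasing g c d -> c != x -> d != x ->
  (c < x < d -> x < y) -> p_increasing (addp h) c d.
Proof.
case=> hc hd hi n1 n2 hxy; split; try exact: fix_addp.
by move=> u; rewrite mem_addp => /orP[/eqP->//|]; exact: hi.
Qed.

Lemma dec_addp g x y (h : compat g x y) c d : p_decreasing g c d -> c != x -> d != x ->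
  (c < x < d -> y < x) -> p_decreasing (addp h) c d.
Proof.
case=> hc hd hi n1 n2 hxy; split; try exact: fix_addp.
by move=> u; rewrite mem_addp => /orP[/eqP->//|]; exact: hi.
Qed.

Lemma fs_ne_x g fs x c : Good g fs -> x \notin dom g -> c \in fs -> c != x.
Proof.
move=> [_ _ hf _ _] hx hc; apply/eqP => e; move: hx; rewrite -e.
by rewrite (fix_dom (hf _ hc)).
Qed.

Lemma Good_addp g fs x y (h : compat g x y) : Good g fs ->
  head 0 fs < x < last 0 fs -> x \notin dom g ->
  (forall i, (i.+1 < size fs)%N -> nth 0 fs i < x < nth 0 fs i.+1 ->
     (p_increasing g (nth 0 fs i) (nth 0 fs i.+1) /\ x < y) \/
     (p_decreasing g (nth 0 fs i) (nth 0 fs i.+1) /\ y < x)) ->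
  Good (addp h) fs.
Proof.
move=> G /andP[h1 h2] hx ho; have [s ne hf hb hm] := G; split => //.
- by move=> c hc; apply: fix_addp; [exact: fs_ne_x G hx hc | exact: hf].
- by move=> u; rewrite mem_addp => /orP[/eqP->|/hb//]; rewrite /= !ltW.
move=> i hi.
have n1 : nth 0 fs i != x by apply: fs_ne_x G hx _; rewrite mem_nth // ltnW.
have n2 : nth 0 fs i.+1 != x by apply: fs_ne_x G hx _; rewrite mem_nth.
case hin: (nth 0 fs i < x < nth 0 fs i.+1).
- case: (ho _ hi hin) => [[hi' hxy]|[hd hxy]]; [left; exact: inc_addp | right; exact: dec_addp].
- case: (hm _ hi) => hmo; [left; apply: inc_addp | right; apply: dec_addp] => //;
  by rewrite hin.
Qed.

Lemma sep (s : seq (rat * rat)) x lo0 hi0 :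
  lo0 < hi0 ->
  (forall u, u \in s -> u.1 < x -> u.2 < hi0) ->
  (forall u, u \in s -> x < u.1 -> lo0 < u.2) ->
  (forall u v, u \in s -> v \in s -> u.1 < x -> x < v.1 -> u.2 < v.2) ->
  exists lo hi, [/\ lo0 <= lo, lo < hi, hi <= hi0,
     (forall u, u \in s -> u.1 < x -> u.2 <= lo) &
     (forall u, u \in s -> x < u.1 -> hi <= u.2)] /\
     (hi = hi0 \/ exists2 v, v \in s & x < v.1 /\ hi = v.2) /\
     (lo = lo0 \/ exists2 v, v \in s & v.1 < x /\ lo = v.2).
Proof.
move=> hlh; elim: s => [|u s IH] H1 H2 H3.
  by exists lo0, hi0; split; [split|split] => //; left.
have [||| lo [hi [[l1 l2 l3 l4 l5] [hp lp]]]] := IH.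
- by move=> v hv; apply: H1; rewrite inE hv orbT.
- by move=> v hv; apply: H2; rewrite inE hv orbT.
- by move=> v w hv hw; apply: H3; rewrite inE ?hv ?hw orbT.
have hu := mem_head u s.
have hs : forall v, v \in s -> v \in u :: s by move=> v hv; rewrite inE hv orbT.
case: (ltgtP u.1 x) => hux.
- have uhi : u.2 < hi.
    case: hp => [->|[v hv [hv1 ->]]]; first exact: H1.
    exact: H3 hu (hs _ hv) hux hv1.
  case: (ltP lo u.2) => hlu.
  + exists u.2, hi; split; last split.
    * split => //; first exact: le_trans l1 (ltW hlu).
      - move=> v; rewrite inE => /orP[/eqP->//|hv hv1].
        exact: le_trans (l4 _ hv hv1) (ltW hlu).
      - move=> v; rewrite inE => /orP[/eqP->|hv hv1]; first by rewrite ltNge (ltW hux).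
        exact: l5.
    * case: hp => [->|[v hv hh]]; [left|right] => //; exists v => //; exact: hs.
    * by right; exists u.
  + exists lo, hi; split; last split.
    * split => //.
      - by move=> v; rewrite inE => /orP[/eqP->//|hv hv1]; exact: l4.
      - move=> v; rewrite inE => /orP[/eqP->|hv hv1]; first by rewrite ltNge (ltW hux).
        exact: l5.
    * case: hp => [->|[v hv hh]]; [left|right] => //; exists v => //; exact: hs.
    * case: lp => [->|[v hv hh]]; [left|right] => //; exists v => //; exact: hs.
- have lou : lo < u.2.
    case: lp => [->|[v hv [hv1 ->]]]; first exact: H2.
    exact: H3 (hs _ hv) hu hv1 hux.
  case: (ltP u.2 hi) => hlu.
  + exists lo, u.2; split; last split.
    * split => //; first exact: le_trans (ltW hlu) l3.
      - move=> v; rewrite inE => /orP[/eqP->|hv hv1]; first by rewrite ltNge (ltW hux).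
        exact: l4.
      - move=> v; rewrite inE => /orP[/eqP->//|hv hv1].
        exact: le_trans (ltW hlu) (l5 _ hv hv1).
    * by right; exists u.
    * case: lp => [->|[v hv hh]]; [left|right] => //; exists v => //; exact: hs.
  + exists lo, hi; split; last split.
    * split => //.
      - move=> v; rewrite inE => /orP[/eqP->|hv hv1]; first by rewrite ltNge (ltW hux).
        exact: l4.
      - by move=> v; rewrite inE => /orP[/eqP->//|hv hv1]; exact: l5.
    * case: hp => [->|[v hv hh]]; [left|right] => //; exists v => //; exact: hs.
    * case: lp => [->|[v hv hh]]; [left|right] => //; exists v => //; exact: hs.
- exists lo, hi; split; last split.
  * split => //.
    - move=> v; rewrite inE => /orP[/eqP->|hv hv1]; first by rewrite hux ltxx.
      exact: l4.
    - move=> v; rewrite inE => /orP[/eqP->|hv hv1]; first by rewrite hux ltxx.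
      exact: l5.
  * case: hp => [->|[v hv hh]]; [left|right] => //; exists v => //; exact: hs.
  * case: lp => [->|[v hv hh]]; [left|right] => //; exists v => //; exact: hs.
Qed.

Lemma pick_between (lo T hi : rat) : lo < hi -> T < hi -> exists y, [/\ lo < y, y < hi & T < y].
Proof.
move=> h1 h2; pose L := if lo < T then T else lo.
have hL : L < hi by rewrite /L; case: ifP.
exists ((L + hi) / 2); have [a b] := midf_lt hL; split => //.
- by apply: le_lt_trans a; rewrite /L; case: ifP => // /ltW.
- by apply: le_lt_trans a; rewrite /L; case: ifP => // /negbT; rewrite -leNgt.
Qed.

Lemma compat_of g x lo hi y : x \notin dom g ->
  (forall u, u \in graph g -> u.1 < x -> u.2 <= lo) ->
  (forall u, u \in graph g -> x < u.1 -> hi <= u.2) ->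
  lo < y -> y < hi -> compat g x y.
Proof.
move=> hx H1 H2 hly hyh u hu.
case: (ltgtP u.1 x) => hux.
- have h := le_lt_trans (H1 _ hu hux) hly; by rewrite h ltNge (ltW h).
- have h := lt_le_trans hyh (H2 _ hu hux); by rewrite h ltNge (ltW h).
- by move: hx; rewrite -hux (in_dom hu).
Qed.

Lemma graph_invinv g : graph (inv (inv g)) = graph g.
Proof. by rewrite /= -map_comp (@eq_map _ _ _ id) ?map_id // => [[a b]]. Qed.

Lemma app_invinv g c : app (inv (inv g)) c = app g c.
Proof. by rewrite /app graph_invinv. Qed.

Lemma app_ext g g' c d : extends g' g -> app g c = Some d -> app g' c = Some d.
Proof. by move=> he /app_in /he /in_app. Qed.

Lemma choose_inc g fs j x B : Good g fs -> (j.+1 < size fs)%N ->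
  nth 0 fs j < x < nth 0 fs j.+1 -> p_increasing g (nth 0 fs j) (nth 0 fs j.+1) ->
  x \notin dom g -> B < nth 0 fs j.+1 ->
  exists y, [/\ x < y, y < nth 0 fs j.+1, compat g x y &
     (B < y \/ exists2 u, u \in graph g & x < u.1 < y)].
Proof.
set c := nth 0 fs j; set d := nth 0 fs j.+1.
move=> G hj /andP[hcx hxd] [hc hd hi] hx hB.
have [||| lo [hi' [[l1 l2 l3 l4 l5] [hp _]]]] := @sep (graph g) x _ _ hxd.
- move=> u hu hux; have [_ e] := fix_lt hd hu.
  by rewrite -e (lt_trans hux hxd).
- move=> u hu hxu; case hud: (u.1 < d).
  + by apply: (lt_trans hxu); apply: (hi _ hu); rewrite hud (lt_trans hcx hxu).
  + have [e _] := fix_le hd hu; move: hud => /negbT; rewrite -leNgt e => hh.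
    exact: lt_le_trans hxd hh.
- by move=> u v hu hv h1 h2; rewrite -(pis hu hv) (lt_trans h1 h2).
have case1 : hi' = d -> exists y, [/\ x < y, y < d, compat g x y &
     (B < y \/ exists2 u, u \in graph g & x < u.1 < y)].
  move=> ehi; have hB' : B < hi' by rewrite ehi.
  have [y [y1 y2 y3]] := pick_between l2 hB'; rewrite ehi in y2.
  exists y; split => //; first exact: le_lt_trans l1 y1.
  - by apply: compat_of hx l4 l5 y1 _; rewrite ehi.
  - by left.
case: hp => [|[v hv [hv1 ehi]]]; first exact: case1.
case hvd: (v.1 < d); last first.
  apply: case1; apply: le_anti; rewrite l3 /= ehi.
  have [e _] := fix_le hd hv; by rewrite -e leNgt hvd.
have hvv : v.1 < v.2 by apply: hi hv _; rewrite hvd (lt_trans hcx hv1).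
have hvv' : v.1 < hi' by rewrite ehi.
have [y [y1 y2 y3]] := pick_between l2 hvv'.
exists y; split => //; first exact: le_lt_trans l1 y1.
- exact: lt_le_trans y2 l3.
- exact: compat_of hx l4 l5 y1 y2.
- by right; exists v => //; rewrite hv1 y3.
Qed.

Lemma choose_dec g fs j x : Good g fs -> (j.+1 < size fs)%N ->
  nth 0 fs j < x < nth 0 fs j.+1 -> p_decreasing g (nth 0 fs j) (nth 0 fs j.+1) ->
  x \notin dom g -> exists y, [/\ y < x, nth 0 fs j < y & compat g x y].
Proof.
set c := nth 0 fs j; set d := nth 0 fs j.+1.
move=> G hj /andP[hcx hxd] [hc hd hi] hx.
have [||| lo [hi' [[l1 l2 l3 l4 l5] _]]] := @sep (graph g) x _ _ hcx.
- move=> u hu hux; case hcu: (c < u.1).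
  + by apply: (lt_trans _ hux); apply: (hi _ hu); rewrite hcu (lt_trans hux hxd).
  + have [_ e] := fix_le hc hu; move: hcu => /negbT; rewrite -leNgt e => hh.
    exact: le_lt_trans hh hcx.
- move=> u hu hxu; have [e _] := fix_lt hc hu.
  by rewrite /= -e (lt_trans hcx hxu).
- by move=> u v hu hv h1 h2; rewrite -(pis hu hv) (lt_trans h1 h2).
have [y [y1 y2 _]] := pick_between l2 l2.
exists y; split.
- exact: lt_le_trans y2 l3.
- exact: le_lt_trans l1 y1.
- exact: compat_of hx l4 l5 y1 y2.
Qed.

Lemma ext1 g fs z : Good g fs -> head 0 fs < z < last 0 fs ->
  exists g', [/\ Good g' fs, extends g' g & exists v, app g' z = Some v].
Proof.
move=> G /andP[h1 h2].
case: (boolP (z \in dom g)) => hz.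
  exists g; split => //; case/mapP: hz => u hu ->.
  by exists u.2; apply: in_app; case: u hu.
have hzf : z \notin fs.
  by apply/negP => hf; move: hz; have [_ _ hfx _ _] := G; rewrite (fix_dom (hfx _ hf)).
have [j [hj hint]] := Good_int G h1 h2 hzf.
have [hs _ _ _ hm] := G.
case: (hm _ hj) => [hinc|hdec].
- have hzd : z < nth 0 fs j.+1 by case/andP: hint.
  have [y [y1 y2 hc _]] := choose_inc G hj hint hinc hz hzd.
  exists (addp hc); split.
  + apply: Good_addp => //; first by rewrite h1 h2.
    move=> i hi hin; have e := int_uniq hs hi hj hin hint; subst i; by left.
  + by move=> u hu; rewrite mem_addp hu orbT.
  + by exists y; exact: app_addp_x.
- have [y [y1 y2 hc]] := choose_dec G hj hint hdec hz.
  exists (addp hc); split.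
  + apply: Good_addp => //; first by rewrite h1 h2.
    move=> i hi hin; have e := int_uniq hs hi hj hin hint; subst i; by right.
  + by move=> u hu; rewrite mem_addp hu orbT.
  + by exists y; exact: app_addp_x.
Qed.

Lemma extZ g fs (Z : seq rat) : Good g fs -> (forall z, z \in Z -> head 0 fs < z < last 0 fs) ->
  exists g', [/\ Good g' fs, extends g' g & forall z, z \in Z -> exists v, app g' z = Some v].
Proof.
elim: Z g => [|z Z IH] g G HZ; first by exists g; split.
have [g1 [G1 e1 h1]] := IH g G (fun z' hz' => HZ z' (mem_behead (s:=z::Z) hz')).
have [g2 [G2 e2 [v hv]]] := ext1 G1 (HZ z (mem_head _ _)).
exists g2; split => //; first by move=> u /e1 /e2.
move=> z'; rewrite inE => /orP[/eqP->|hz']; first by exists v.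
by have [v' hv'] := h1 _ hz'; exists v'; exact: app_ext e2 hv'.
Qed.

Definition Inv3 (h0 h : pisom) (x : rat) := forall u, u \in graph h ->
  u \in graph h0 \/ [/\ u.1 <= x, u.2 <= x & (u.1 < x) || (u.2 < x)].

Lemma Inv3_mono h0 h x y : x <= y -> Inv3 h0 h x -> Inv3 h0 h y.
Proof.
move=> hxy H u hu; case: (H u hu) => [|[a b c]]; first by left.
right; split; [exact: le_trans a hxy | exact: le_trans b hxy |].
by case/orP: c => hc; rewrite (lt_le_trans hc hxy) ?orbT.
Qed.

Lemma Inv3_refl h0 x : Inv3 h0 h0 x.
Proof. by move=> u hu; left. Qed.

Lemma Inv3_inv h0 h x : Inv3 h0 h x -> Inv3 (inv h0) (inv h) x.
Proof.
move=> H u; rewrite mem_inv => /H [hh|[a b c]]; first by left; rewrite mem_inv.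
by right; split => //; rewrite orbC.
Qed.

Lemma Inv3_invinv h0 h x : Inv3 (inv h0) h x -> Inv3 h0 (inv h) x.
Proof.
move=> H u; rewrite mem_inv => /H [hh|[a b c]]; first by left; move: hh; rewrite mem_inv; case: u.
by right; split => //; rewrite orbC.
Qed.

Lemma head_le (fs : seq rat) i : sorted <%R fs -> (i < size fs)%N -> head 0 fs <= nth 0 fs i.
Proof. by move=> hs hi; rewrite -nth0; apply: nth_le. Qed.

Lemma le_last (fs : seq rat) i : sorted <%R fs -> (i < size fs)%N -> nth 0 fs i <= last 0 fs.
Proof.
move=> hs hi; have hp : (0 < size fs)%N by case: (size fs) hi.
rewrite -nth_last; apply: nth_le => //; last by rewrite prednK.
by rewrite -ltnS prednK.
Qed.

Lemma hstep h0 h fs j x B : Good h fs -> Inv3 h0 h x -> (j.+1 < size fs)%N ->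
  nth 0 fs j < x < nth 0 fs j.+1 -> p_increasing h (nth 0 fs j) (nth 0 fs j.+1) ->
  B < nth 0 fs j.+1 ->
  exists h' y, [/\ Good h' fs, extends h' h, Inv3 h0 h' y, app h' x = Some y &
     x < y < nth 0 fs j.+1] /\ (B < y \/ exists2 u, u \in graph h0 & x <= u.1 < y).
Proof.
move=> G H3 hj hint hinc hB.
have [hs _ _ _ _] := G.
case: (boolP (x \in dom h)) => hx.
  case/mapP: hx => [[a b]] hu /= ex; subst a.
  have hxy : x < b.
    have [_ _ hi] := hinc; exact: (hi _ hu hint).
  have hyd : b < nth 0 fs j.+1.
    have [_ hd _] := hinc; have [_ e] := fix_lt hd hu; rewrite /= in e.
    by rewrite -e; case/andP: hint.
  exists h, b; split; first split => //.
  - exact: Inv3_mono (ltW hxy) H3.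
  - exact: in_app.
  - by rewrite hxy hyd.
  right; exists (x, b); last by rewrite /= lexx hxy.
  case: (H3 _ hu) => // [[_ hb _]]; by move: hb; rewrite /= leNgt hxy.
have hxd : x < nth 0 fs j.+1 by case/andP: hint.
have [y [y1 y2 hc hp]] := choose_inc G hj hint hinc hx hB.
exists (addp hc), y; split; first split.
- apply: Good_addp => //.
  + case/andP: hint => a b; apply/andP; split.
    * apply: le_lt_trans a; exact: head_le (ltnW hj).
    * apply: lt_le_trans b _; exact: le_last hj.
  + move=> i hi hin; have e := int_uniq hs hi hj hin hint; subst i; by left.
- by move=> u hu; rewrite mem_addp hu orbT.
- move=> u; rewrite mem_addp => /orP[/eqP->|hu]; first by right; rewrite /= lexx y1 (ltW y1).
  case: (H3 u hu) => [|hh]; first by left.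
  right; case: hh => a b c; split; [exact: le_trans a (ltW y1) | exact: le_trans b (ltW y1) |].
  by case/orP: c => hc2; rewrite (lt_trans hc2 y1) ?orbT.
- exact: app_addp_x.
- by rewrite y1 y2.
case: hp => [hp|[u hu /andP[u1 u2]]]; first by left.
right; exists u; last by rewrite (ltW u1) u2.
by case: (H3 u hu) => // [[a _ _]]; move: a; rewrite leNgt u1.
Qed.

Lemma ext_inv g g' : extends g' g -> extends (inv g') (inv g).
Proof. by move=> he u; rewrite !mem_inv; exact: he. Qed.

Lemma gstep h0 g fs j x B : Good g fs -> Inv3 h0 g x -> (j.+1 < size fs)%N ->
  nth 0 fs j < x < nth 0 fs j.+1 -> B < nth 0 fs j.+1 ->
  exists g' (b : bool) y, [/\ Good g' fs, extends g' g, Inv3 h0 g' y,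
     app (if b then g' else inv g') x = Some y & x < y < nth 0 fs j.+1] /\
     (B < y \/ exists2 v, v \in dom h0 ++ ran h0 & x <= v < y).
Proof.
move=> G H3 hj hint hB; have [_ _ _ _ hm] := G.
case: (hm _ hj) => [hinc|hdec].
- have [h' [y [[a1 a2 a3 a4 a5] pr]]] := hstep G H3 hj hint hinc hB.
  exists h', true, y; split; first by split.
  case: pr => [|[u hu hh]]; [by left | right].
  by exists u.1; rewrite // mem_cat in_dom.
- have [h' [y [[a1 a2 a3 a4 a5] pr]]] :=
    hstep (Good_inv G) (Inv3_inv H3) hj hint (dec_inc_inv hdec) hB.
  exists (inv h'), false, y; split; first split => //.
  + exact: Good_inv.
  + by move=> u hu; rewrite mem_inv; apply: a2; rewrite mem_inv; case: u hu.
  + exact: Inv3_invinv.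
  + by rewrite app_invinv.
  case: pr => [|[u hu hh]]; [by left | right].
  exists u.1 => //; rewrite mem_cat; apply/orP; right.
  by move: hu; rewrite mem_inv => /in_ran.
Qed.

Definition gpick (G : gen) (P Q : pisom) := if G is gs then P else Q.

Lemma act_pick P Q (G : gen) (b : bool) x :
  act P Q (G, b) x = app (if b then gpick G P Q else inv (gpick G P Q)) x.
Proof. by case: G; case: b; rewrite /= ?appinvE. Qed.

Fixpoint tr (P Q : pisom) (w : word) (x0 x : rat) : Prop :=
  match w with
  | [::] => x = x0
  | l :: w' => exists2 z, tr P Q w' x0 z & act P Q l z = Some x /\ z < x
  end.

Lemma tr_eval P Q w x0 x : tr P Q w x0 x -> eval P Q w x0 = Some x.
Proof.
elim: w x => [|l w IH] x /=; first by move->.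
by case=> z /IH -> [].
Qed.

Lemma act_ext P Q P' Q' l z v : extends P' P -> extends Q' Q ->
  act P Q l z = Some v -> act P' Q' l z = Some v.
Proof.
case: l => G b; rewrite !act_pick => e1 e2; apply: app_ext.
by case: G; case: b => //=; apply: ext_inv.
Qed.

Lemma eval_ext P Q P' Q' w z v : extends P' P -> extends Q' Q ->
  eval P Q w z = Some v -> eval P' Q' w z = Some v.
Proof.
move=> e1 e2; elim: w v => [|l w IH] v //=.
case e: (eval P Q w z) => [u|] // h; rewrite (IH _ e).
exact: act_ext e1 e2 h.
Qed.

Lemma tr_ext P Q P' Q' w x0 x : extends P' P -> extends Q' Q ->
  tr P Q w x0 x -> tr P' Q' w x0 x.
Proof.
move=> e1 e2; elim: w x => [|l w IH] x //=.
case=> z /IH h [a b]; exists z => //; split => //; exact: act_ext e1 e2 a.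
Qed.

Lemma app_swap g a b : app g a = Some b -> app (inv g) b = Some a.
Proof. by move/app_in => h; apply: in_app; rewrite mem_inv. Qed.

Lemma app_swap' g a b : app (inv g) a = Some b -> app g b = Some a.
Proof. by move/app_swap; rewrite app_invinv. Qed.

Lemma act_inv P Q (G : gen) (b : bool) z x : act P Q (G, b) z = Some x ->
  act P Q (G, ~~ b) x = Some z.
Proof.
rewrite !act_pick; case: b => /=; first exact: app_swap.
exact: app_swap'.
Qed.

Lemma tr_reduced P Q w x0 x : tr P Q w x0 x -> reduced w.
Proof.
elim: w x => [|l w IH] x /=; first by move=> _ i.
case=> z hz [hl hzx] [|i] /=.
- case: w IH hz => [|l' w'] _ //= hz _ [e1 e2].
  case: hz => z' hz' [hl' hz'z].
  case: l hl e1 e2 => G b hl e1 e2; case: l' hl' e1 e2 => G' b' hl' /= e1 e2; subst G'.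
  have hb : b = ~~ b' by case: b b' e2 {hl hl'} => [] [].
  subst b; have := act_inv hl'; rewrite hl => [[e]]; subst z'.
  by have := lt_trans hz'z hzx; rewrite ltxx.
- move=> hi; exact: (IH z hz i hi).
Qed.

Lemma act_lt P Q l a b a' b' : act P Q l a = Some a' -> act P Q l b = Some b' ->
  (a < b) = (a' < b').
Proof.
case: l => G c; rewrite !act_pick => /app_in h1 /app_in h2.
exact: pis h1 h2.
Qed.

Lemma eval_lt P Q w a b a' b' : eval P Q w a = Some a' -> eval P Q w b = Some b' ->
  (a < b) = (a' < b').
Proof.
elim: w a' b' => [|l w IH] a' b' /=; first by move=> [->] [->].
case e1: (eval P Q w a) => [u|] //; case e2: (eval P Q w b) => [v|] // h1 h2.
by rewrite (IH _ _ e1 e2); exact: act_lt h1 h2.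
Qed.

Lemma eval_fix P Q w c : isfix P c -> isfix Q c -> eval P Q w c = Some c.
Proof.
move=> hp hq; elim: w => [|[G b] w IH] //.
have -> : eval P Q ((G, b) :: w) c = act P Q (G, b) c by rewrite /= IH.
rewrite act_pick.
have fi : forall g, isfix g c -> isfix (inv g) c.
  by move=> g /fix_in h; apply: in_fix; rewrite mem_inv.
by case: G; case: b => /=; [exact: hp|exact: fi|exact: hq|exact: fi].
Qed.

Lemma pstep p P Q fsp w x0 x j B : Good P fsp -> Inv3 p P x -> tr P Q w x0 x ->
  (j.+1 < size fsp)%N -> nth 0 fsp j < x < nth 0 fsp j.+1 -> B < nth 0 fsp j.+1 ->
  exists P' (b : bool) y, [/\ Good P' fsp, extends P' P, Inv3 p P' y,
     tr P' Q ((gs, b) :: w) x0 y & x < y < nth 0 fsp j.+1] /\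
     (B < y \/ exists2 v, v \in dom p ++ ran p & x <= v < y).
Proof.
move=> G H3 ht hj hint hB.
have [g' [b [y [[a1 a2 a3 a4 a5] pr]]]] := gstep G H3 hj hint hB.
exists g', b, y; split => //; split => //.
exists x; first exact: tr_ext ht.
by rewrite act_pick /=; case/andP: a5 => -> _.
Qed.

Lemma qstep q P Q fsq w x0 x j B : Good Q fsq -> Inv3 q Q x -> tr P Q w x0 x ->
  (j.+1 < size fsq)%N -> nth 0 fsq j < x < nth 0 fsq j.+1 -> B < nth 0 fsq j.+1 ->
  exists Q' (b : bool) y, [/\ Good Q' fsq, extends Q' Q, Inv3 q Q' y,
     tr P Q' ((gt, b) :: w) x0 y & x < y < nth 0 fsq j.+1] /\
     (B < y \/ exists2 v, v \in dom q ++ ran q & x <= v < y).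
Proof.
move=> G H3 ht hj hint hB.
have [g' [b [y [[a1 a2 a3 a4 a5] pr]]]] := gstep G H3 hj hint hB.
exists g', b, y; split => //; split => //.
exists x; first exact: tr_ext ht.
by rewrite act_pick /=; case/andP: a5 => -> _.
Qed.

Definition cnt (L : seq rat) (x : rat) := count (fun v => x <= v) L.

Lemma cnt_mono L x y : x <= y -> (cnt L y <= cnt L x)%N.
Proof. by move=> hxy; apply: sub_count => v /= h; exact: le_trans hxy h. Qed.

Lemma cnt_lt L x y v : x <= y -> v \in L -> x <= v < y -> (cnt L y < cnt L x)%N.
Proof.
move=> hxy; elim: L => [|a L IH] //=; rewrite inE => /orP[/eqP->|hv] /andP[h1 h2].
- rewrite h1 leNgt h2 /= add0n ltnS; exact: cnt_mono.
- have := IH hv; rewrite h1 h2 => /(_ isT) h.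
  case hya: (y <= a); first by rewrite (le_trans hxy hya) ltn_add2l.
  by rewrite add0n; apply: (leq_trans h); exact: leq_addl.
Qed.

Lemma cnt_size L x : (cnt L x <= size L)%N.
Proof. exact: count_size. Qed.

Lemma meas1 a a' b b' K : (a' < a)%N -> (b' <= K)%N -> (a' * K.+1 + b' < a * K.+1 + b)%N.
Proof.
move=> ha hb; apply: (@leq_trans (a * K.+1)); last exact: leq_addr.
apply: (@leq_trans (a'.+1 * K.+1)); last by rewrite leq_mul2r ha orbT.
by rewrite mulSn addnC ltn_add2r ltnS.
Qed.

Lemma meas2 a a' b b' K : (a' <= a)%N -> (b' < b)%N -> (a' * K.+1 + b' < a * K.+1 + b)%N.
Proof.
move=> ha hb; apply: (@leq_ltn_trans (a * K.+1 + b')); last by rewrite ltn_add2l.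
by rewrite leq_add2r leq_mul2r ha orbT.
Qed.

Definition Orig (p q : pisom) := dom p ++ ran p ++ dom q ++ ran q.
Definition Nm (fsp fsq : seq rat) p q x :=
  (cnt (fsp ++ fsq) x * (size (Orig p q)).+1 + cnt (Orig p q) x)%N.

Lemma Orig_p p q v : v \in dom p ++ ran p -> v \in Orig p q.
Proof. by move=> hv; rewrite /Orig catA mem_cat hv. Qed.

Lemma Orig_q p q v : v \in dom q ++ ran q -> v \in Orig p q.
Proof. by rewrite /Orig !mem_cat => /orP[]->; rewrite ?orbT. Qed.

Lemma le_last_mem (fs : seq rat) f : sorted <%R fs -> f \in fs -> f <= last 0 fs.
Proof. by move=> hs hf; rewrite -(nth_index 0 hf); apply: le_last; rewrite ?index_mem. Qed.

Lemma head_le_mem (fs : seq rat) f : sorted <%R fs -> f \in fs -> head 0 fs <= f.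
Proof. by move=> hs hf; rewrite -(nth_index 0 hf); apply: head_le; rewrite ?index_mem. Qed.

Lemma one_step p q fsp fsq x0 P Q w x :
  head 0 fsp = head 0 fsq -> last 0 fsp = last 0 fsq ->
  (forall c, c \in fsp -> c \in fsq -> c = head 0 fsq \/ c = last 0 fsq) ->
  Good P fsp -> Good Q fsq -> Inv3 p P x -> Inv3 q Q x -> extends P p -> extends Q q ->
  head 0 fsq < x < last 0 fsq -> tr P Q w x0 x ->
  ~~ all (fun f => (f < x) || (f == last 0 fsq)) fsq ->
  exists P' Q' w' y, [/\ Good P' fsp, Good Q' fsq, Inv3 p P' y, Inv3 q Q' y & extends P' p] /\
    [/\ extends Q' q, head 0 fsq < y < last 0 fsq, tr P' Q' w' x0 y &
        (Nm fsp fsq p q y < Nm fsp fsq p q x)%N].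
Proof.
move=> em eM hcom GP GQ IP IQ EP EQ /andP[hmx hxM] ht hnd.
have [hsp _ hfp _ _] := GP; have [hsq _ hfq _ _] := GQ.
have hmx' : head 0 fsp < x by rewrite em.
have hxM' : x < last 0 fsp by rewrite eM.
have dpM : forall j, (j.+1 < size fsp)%N -> nth 0 fsp j.+1 <= last 0 fsq.
  by move=> j hj; rewrite -eM; apply: le_last.
have dqM : forall j, (j.+1 < size fsq)%N -> nth 0 fsq j.+1 <= last 0 fsq.
  by move=> j hj; apply: le_last.
have Fin : forall f, f \in fsp ++ fsq -> x <= f -> forall y, x < y -> f < y ->
    (Nm fsp fsq p q y < Nm fsp fsq p q x)%N.
  move=> f hf hxf y hxy hfy; apply: meas1; last exact: cnt_size.
  by apply: (cnt_lt (ltW hxy) hf); rewrite hxf hfy.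
have Pin : forall v, v \in Orig p q -> x <= v -> forall y, x < y -> v < y ->
    (Nm fsp fsq p q y < Nm fsp fsq p q x)%N.
  move=> v hv hxv y hxy hvy; apply: meas2; first exact: cnt_mono (ltW hxy).
  by apply: (cnt_lt (ltW hxy) hv); rewrite hxv hvy.
have finP : forall j B, (j.+1 < size fsp)%N -> nth 0 fsp j < x < nth 0 fsp j.+1 ->
    B < nth 0 fsp j.+1 ->
    (forall y, x < y -> B < y -> (Nm fsp fsq p q y < Nm fsp fsq p q x)%N) ->
    exists P' Q' w' y, [/\ Good P' fsp, Good Q' fsq, Inv3 p P' y, Inv3 q Q' y & extends P' p] /\
    [/\ extends Q' q, head 0 fsq < y < last 0 fsq, tr P' Q' w' x0 y &
        (Nm fsp fsq p q y < Nm fsp fsq p q x)%N].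
  move=> j B hj hint hB hcross.
  have [P' [b [y [[a1 a2 a3 a4 /andP[a5 a6]] pr]]]] := pstep GP IP ht hj hint hB.
  exists P', Q, ((gs, b) :: w), y; split; split => //.
  - exact: Inv3_mono (ltW a5) IQ.
  - by move=> u /EP /a2.
  - by rewrite (lt_trans hmx a5) (lt_le_trans a6 (dpM _ hj)).
  - case: pr => [hBy|[v hv hh]]; first exact: hcross.
    by case/andP: hh => h1 h2; apply: (Pin v (Orig_p _ hv) h1).
have finQ : forall j B, (j.+1 < size fsq)%N -> nth 0 fsq j < x < nth 0 fsq j.+1 ->
    B < nth 0 fsq j.+1 ->
    (forall y, x < y -> B < y -> (Nm fsp fsq p q y < Nm fsp fsq p q x)%N) ->
    exists P' Q' w' y, [/\ Good P' fsp, Good Q' fsq, Inv3 p P' y, Inv3 q Q' y & extends P' p] /\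
    [/\ extends Q' q, head 0 fsq < y < last 0 fsq, tr P' Q' w' x0 y &
        (Nm fsp fsq p q y < Nm fsp fsq p q x)%N].
  move=> j B hj hint hB hcross.
  have [Q' [b [y [[a1 a2 a3 a4 /andP[a5 a6]] pr]]]] := qstep GQ IQ ht hj hint hB.
  exists P, Q', ((gt, b) :: w), y; split; split => //.
  - exact: Inv3_mono (ltW a5) IP.
  - by move=> u /EQ /a2.
  - by rewrite (lt_trans hmx a5) (lt_le_trans a6 (dqM _ hj)).
  - case: pr => [hBy|[v hv hh]]; first exact: hcross.
    by case/andP: hh => h1 h2; apply: (Pin v (Orig_q _ hv) h1).
case: (boolP (x \in fsq)) => hxq.
  have hxp : x \notin fsp.
    apply/negP => hxp; case: (hcom _ hxp hxq) => e.
    - by move: hmx; rewrite e ltxx.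
    - by move: hxM; rewrite e ltxx.
  have [j [hj hint]] := Good_int GP hmx' hxM' hxp.
  apply: (finP j x hj hint); first by case/andP: hint.
  move=> y hxy _; apply: (Fin x _ (lexx x) y hxy hxy); by rewrite mem_cat hxq orbT.
case: (boolP (x \in fsp)) => hxp.
  have [j [hj hint]] := Good_int GQ hmx hxM hxq.
  apply: (finQ j x hj hint); first by case/andP: hint.
  move=> y hxy _; apply: (Fin x _ (lexx x) y hxy hxy); by rewrite mem_cat hxp.
have [jp [hjp hintp]] := Good_int GP hmx' hxM' hxp.
have [jq [hjq hintq]] := Good_int GQ hmx hxM hxq.
have hdp := mem_nth 0 hjp; have hdq := mem_nth 0 hjq.
case: (ltgtP (nth 0 fsp jp.+1) (nth 0 fsq jq.+1)) => hd.
- apply: (finQ jq (nth 0 fsp jp.+1) hjq hintq hd).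
  move=> y hxy hBy; apply: (Fin _ _ _ y hxy hBy); first by rewrite mem_cat hdp.
  by case/andP: hintp => _ /ltW.
- apply: (finP jp (nth 0 fsq jq.+1) hjp hintp hd).
  move=> y hxy hBy; apply: (Fin _ _ _ y hxy hBy); first by rewrite mem_cat hdq orbT.
  by case/andP: hintq => _ /ltW.
- exfalso; move: hdp; rewrite hd => hdp'.
  case: (hcom _ hdp' hdq) => e.
  + by case/andP: hintq => _; rewrite e => /(lt_trans hmx); rewrite ltxx.
  + move/negP: hnd; apply; apply/allP => f hf.
    case: (gap hsq hjq hf) => hh.
    * by rewrite (le_lt_trans hh (andP hintq).1).
    * by rewrite e in hh; rewrite eq_le (le_last_mem hsq hf) hh orbT.
Qed.

Lemma phase1 p q fsp fsq x0 :
  head 0 fsp = head 0 fsq -> last 0 fsp = last 0 fsq ->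
  (forall c, c \in fsp -> c \in fsq -> c = head 0 fsq \/ c = last 0 fsq) ->
  forall n P Q w x, (Nm fsp fsq p q x <= n)%N ->
  Good P fsp -> Good Q fsq -> Inv3 p P x -> Inv3 q Q x -> extends P p -> extends Q q ->
  head 0 fsq < x < last 0 fsq -> tr P Q w x0 x ->
  exists P' Q' w' x', [/\ Good P' fsp, Good Q' fsq, extends P' p & extends Q' q] /\
    [/\ head 0 fsq < x' < last 0 fsq, tr P' Q' w' x0 x' &
        forall f, f \in fsq -> f < x' \/ f = last 0 fsq].
Proof.
move=> em eM hcom; elim=> [|n IH] P Q w x hn GP GQ IP IQ EP EQ hx ht;
  (case: (boolP (all (fun f => (f < x) || (f == last 0 fsq)) fsq)) => hall;
   [exists P, Q, w, x; split; split => // f hf; have := allP hall f hf;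
    by case/orP => [->|/eqP->]; [left|right] | ]).
- have [P' [Q' [w' [y [_ [_ _ _ hlt]]]]]] := one_step em eM hcom GP GQ IP IQ EP EQ hx ht hall.
  by move: hn; rewrite leqn0 => /eqP e; rewrite e in hlt.
- have [P' [Q' [w' [y [[a1 a2 a3 a4 a5] [b1 b2 b3 b4]]]]]] :=
    one_step em eM hcom GP GQ IP IQ EP EQ hx ht hall.
  apply: (IH P' Q' w' y) => //.
  by rewrite -ltnS; exact: leq_trans b4 hn.
Qed.

Definition isgt (l : letter) := if l.1 is gt then true else false.

Lemma ext_b g fs (b : bool) (Z : seq rat) : Good g fs -> (forall z, z \in Z -> head 0 fs < z < last 0 fs) ->
  exists g', [/\ Good g' fs, extends g' g &
    forall z, z \in Z -> exists d, app (if b then g' else inv g') z = Some d].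
Proof.
move=> G HZ; case: b.
  by have [g' [a1 a2 a3]] := extZ G HZ; exists g'.
have [g' [a1 a2 a3]] := extZ (Good_inv G) HZ.
exists (inv g'); split.
- exact: Good_inv.
- by move=> u hu; rewrite mem_inv; apply: a2; rewrite mem_inv; case: u hu.
- by move=> z hz; rewrite app_invinv; exact: a3.
Qed.

Lemma eval_bnd P Q fsp fsq w z d : Good P fsp -> Good Q fsq ->
  head 0 fsp = head 0 fsq -> last 0 fsp = last 0 fsq ->
  head 0 fsq < z < last 0 fsq -> eval P Q w z = Some d -> head 0 fsq < d < last 0 fsq.
Proof.
move=> GP GQ em eM /andP[h1 h2] he.
have fm : eval P Q w (head 0 fsq) = Some (head 0 fsq).
  by apply: eval_fix; [rewrite -em; exact: Good_fixm GP | exact: Good_fixm GQ].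
have fM : eval P Q w (last 0 fsq) = Some (last 0 fsq).
  by apply: eval_fix; [rewrite -eM; exact: Good_fixM GP | exact: Good_fixM GQ].
by rewrite -(eval_lt fm he) -(eval_lt he fM) h1 h2.
Qed.

Lemma defd fsp fsq : head 0 fsp = head 0 fsq -> last 0 fsp = last 0 fsq ->
  forall w (Z : seq rat) P Q, Good P fsp -> Good Q fsq ->
  (forall z, z \in Z -> head 0 fsq < z < last 0 fsq) ->
  exists P' Q', [/\ Good P' fsp, Good Q' fsq, extends P' P & extends Q' Q] /\
    (all isgt w -> extends P P') /\
    (forall z, z \in Z -> exists d, eval P' Q' w z = Some d).
Proof.
move=> em eM; elim=> [|[G b] w IH] Z P Q GP GQ HZ.
  exists P, Q; split; first by split.
  split; first by move=> _ u.
  by move=> z hz; exists z.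
have [P1 [Q1 [[a1 a2 a3 a4] [fl hd]]]] := IH Z P Q GP GQ HZ.
pose Z1 := pmap (eval P1 Q1 w) Z.
have HZ1 : forall u, u \in Z1 -> head 0 fsq < u < last 0 fsq.
  move=> u; rewrite mem_pmap => /mapP[z hz /esym hev].
  exact: eval_bnd a1 a2 em eM (HZ z hz) hev.
have fin : forall P' Q', extends P' P1 -> extends Q' Q1 ->
    (forall u, u \in Z1 -> exists d, act P' Q' (G, b) u = Some d) ->
    forall z, z \in Z -> exists d, eval P' Q' ((G, b) :: w) z = Some d.
  move=> P' Q' e1 e2 hact z hz.
  have [u hu] := hd z hz.
  have hu' := eval_ext e1 e2 hu.
  have : u \in Z1 by rewrite mem_pmap -hu; exact: map_f.
  by move/hact => [d hdd]; exists d; rewrite /= hu'.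
case: G fin.
- move=> fin.
  have HZ1' : forall u, u \in Z1 -> head 0 fsp < u < last 0 fsp by rewrite em eM.
  have [g' [c1 c2 c3]] := ext_b b a1 HZ1'.
  exists g', Q1; split; first split => //.
  + by move=> u /a3 /c2.
  split => //.
  apply: fin => // u hu; rewrite act_pick; exact: c3.
- move=> fin.
  have [g' [c1 c2 c3]] := ext_b b a2 HZ1.
  exists P1, g'; split; first split => //.
  + by move=> u /a4 /c2.
  split => //.
  apply: fin => // u hu; rewrite act_pick; exact: c3.
Qed.

Lemma tr_uniq P Q w x0 a b : tr P Q w x0 a -> tr P Q w x0 b -> a = b.
Proof. by move=> /tr_eval h1 /tr_eval; rewrite h1 => [[]]. Qed.

Lemma phase3 (q2 P : pisom) fsq x0 j B : (j.+1 < size fsq)%N ->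
  nth 0 fsq j.+1 = last 0 fsq -> B < last 0 fsq ->
  forall n Q w x, (cnt (dom q2 ++ ran q2) x <= n)%N -> Good Q fsq -> Inv3 q2 Q x ->
  nth 0 fsq j < x < last 0 fsq -> tr P Q w x0 x ->
  exists Q' v y, [/\ Good Q' fsq, extends Q' Q, tr P Q' (v ++ w) x0 y, B < y & y < last 0 fsq] /\
   (exists b v0 z, [/\ v = (gt, b) :: v0, all isgt v0,
      tr P Q' (v0 ++ w) x0 z, act P Q' (gt, b) z = Some y & nth 0 fsq j < z < y]).
Proof.
move=> hj hM hB; elim=> [|n IH] Q w x hn GQ IQ hx ht.
all: have hint : nth 0 fsq j < x < nth 0 fsq j.+1 by rewrite hM.
all: have hB' : B < nth 0 fsq j.+1 by rewrite hM.
all: have [Q' [b [y [[a1 a2 a3 a4 /andP[a5 a6]] pr]]]] := qstep GQ IQ ht hj hint hB'.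
all: have a4' := a4; case: a4' => z hz [hzy _].
all: have ezx : z = x by apply: tr_uniq hz (tr_ext (fun u h => h) a2 ht).
all: subst z.
all: case: pr => [hBy|[v hv /andP[h1 h2]]].
1,3: exists Q', [:: (gt, b)], y; split; first by split => //; rewrite -hM.
1,2: exists b, [::], x; split => //.
1,2: by case/andP: hx => -> _; rewrite a5.
- by have := cnt_lt (ltW a5) hv (introT andP (conj h1 h2)); rewrite ltnNge (leq_trans hn (leq0n _)).
have hn' : (cnt (dom q2 ++ ran q2) y <= n)%N.
  by rewrite -ltnS; apply: leq_trans hn; apply: cnt_lt (ltW a5) hv _; rewrite h1 h2.
have hy : nth 0 fsq j < y < last 0 fsq.
  by case/andP: hx => hh _; rewrite (lt_trans hh a5) -hM a6.
have [Q'' [v' [y' [[c1 c2 c3 c4 c5] [b' [v0 [z [d1 d2 d3 d4 d5]]]]]]]] := IH Q' _ y hn' a1 a3 hy a4.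
exists Q'', (rcons v' (gt, b)), y'; split; first split => //.
- by move=> u /a2 /c2.
- by rewrite cat_rcons.
exists b', (rcons v0 (gt, b)), z; split => //.
- by rewrite d1.
- by rewrite all_rcons d2.
- by rewrite cat_rcons.
Qed.

Lemma eval_cat P Q v w c : eval P Q (v ++ w) c =
  match eval P Q w c with Some u => eval P Q v u | None => None end.
Proof.
elim: v => [|l v IH] /=; first by case: (eval P Q w c).
rewrite IH; by case: (eval P Q w c).
Qed.

Lemma Ess_sub P2 P4 fs x : Good P2 fs -> Good P4 fs -> extends P2 P4 ->
  x \in Ess P4 -> x \in Ess P2.
Proof.
move=> G2 G4 he; have [e1 e2] := Good_mindom G2; have [e3 e4] := Good_mindom G4.
rewrite !mem_Ess e1 e2 e3 e4 => /and3P[h1 -> ->]; rewrite andbT.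
move: h1; rewrite !mem_cat => /orP[]/mapP[u hu ->].
- by rewrite (in_dom (he _ hu)).
- by rewrite (in_ran (he _ hu)) orbT.
Qed.

Lemma lib_p p q : elementary p q -> exists p' q' w, liberates_p p q p' q' w.
Proof.
case=> ip iq emin emax hcom.
case: (boolP ((Ess p ++ Ess q) == [::])) => hE.
  exists p, q, [:: (gt, true)]; split.
  - by split => u.
  - by move=> [|i].
  - by split.
  - by split.
  exists true, [::]; split => //; split.
  + by move=> c; rewrite (eqP hE).
  + by move=> m; rewrite (eqP hE).
  + exists (maxdom q); split; first by move=> c d; rewrite (eqP hE).
    have [_ _ hM _] := iq; split => // u _ /andP[h1 h2].
    by have := lt_trans h1 h2; rewrite ltxx.
have [fsp [GP hp1 hp2]] := inf_Good ip.
have [fsq [GQ hq1 hq2]] := inf_Good iq.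
have em : head 0 fsp = head 0 fsq by rewrite hp1 hq1.
have eM : last 0 fsp = last 0 fsq by rewrite hp2 hq2.
have hcom' : forall c, c \in fsp -> c \in fsq -> c = head 0 fsq \/ c = last 0 fsq.
  move=> c h1 h2; have [_ _ f1 _ _] := GP; have [_ _ f2 _ _] := GQ.
  by rewrite -em -eM hp1 hp2; apply: hcom; [exact: f1 | exact: f2].
set E := Ess p ++ Ess q.
have HE : forall c, c \in E -> head 0 fsq < c < last 0 fsq.
  move=> c; rewrite mem_cat => /orP[] h; last exact: Ess_bnd GQ h.
  by rewrite -em -eM; exact: Ess_bnd GP h.
pose x0 := foldr Order.min (head 0 E) E.
have hx0 : x0 \in E by have := foldr_min_mem (head 0 E) E; rewrite head_mem_cons.
have hx0m : forall c, c \in E -> x0 <= c.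
  by move=> c hc; apply: foldr_min_le; rewrite head_mem_cons.
have [P1 [Q1 [w1 [x1 [[b1 b2 b3 b4] [b5 b6 b7]]]]]] :=
  @phase1 p q fsp fsq x0 em eM hcom' _ p q [::] x0 (leqnn _) GP GQ
    (@Inv3_refl p x0) (@Inv3_refl q x0) (fun u h => h) (fun u h => h) (HE _ hx0) (erefl x0).
have [P2 [Q2 [[c1 c2 c3 c4] [_ c6]]]] := @defd fsp fsq em eM w1 E P1 Q1 b1 b2 HE.
have hx1q : x1 \notin fsq.
  apply/negP => h; case: (b7 _ h) => hh; first by rewrite ltxx in hh.
  by move: b5; rewrite hh ltxx andbF.
have [j [hj hint]] := Good_int c2 (andP b5).1 (andP b5).2 hx1q.
have hjM : nth 0 fsq j.+1 = last 0 fsq.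
  case: (b7 _ (mem_nth 0 hj)) => // hh; exfalso; case/andP: hint => _ h'.
  by have := lt_trans h' hh; rewrite ltxx.
pose B := foldr Order.max x1 (Ess P2).
have hBM : B < last 0 fsq.
  rewrite /B; have := foldr_max_mem x1 (Ess P2); rewrite inE => /orP[/eqP->|h]; first exact: (andP b5).2.
  by rewrite -eM; exact: (andP (Ess_bnd c1 h)).2.
have ht2 := tr_ext c3 c4 b6.
have hx1 : nth 0 fsq j < x1 < last 0 fsq by rewrite (andP hint).1 (andP b5).2.
have [Q3 [v [y [[d1 d2 d3 d4 d5] [b [v0 [z [e1 e2 e3 e4 e5]]]]]]]] :=
  @phase3 Q2 P2 fsq x0 j B hj hjM hBM _ Q2 w1 x1 (leqnn _) c2 (@Inv3_refl Q2 x1) hx1 ht2.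
pose Z1 := pmap (eval P2 Q2 w1) E.
have HZ1 : forall u, u \in Z1 -> head 0 fsq < u < last 0 fsq.
  move=> u; rewrite mem_pmap => /mapP[c hc /esym hev].
  exact: eval_bnd c1 c2 em eM (HE c hc) hev.
have [P4 [Q4 [[f1 f2 f3 f4] [f5 f6]]]] := @defd fsp fsq em eM v Z1 P2 Q3 c1 d1 HZ1.
have allv : all isgt v by rewrite e1 /= e2.
have eP := f5 allv.
have htf : tr P4 Q4 (v ++ w1) x0 y := tr_ext f3 f4 d3.
have [g1 g2] := Good_mindom f1; have [g3 g4] := Good_mindom f2.
have EQ2 : extends Q4 Q2 by move=> u /d2 /f4.
exists P4, Q4, (v ++ w1); split.
- by split => u hu; [apply: f3; apply: c3; apply: b3 | apply: EQ2; apply: c4; apply: b4].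
- exact: tr_reduced htf.
- by split; [exact: Good_inf f1 | exact: Good_inf f2].
- by split; rewrite ?g1 ?g2 ?g3 ?g4.
exists b, (v0 ++ w1); split; first by rewrite e1.
split.
- move=> c hc; have [u hu] := c6 c hc.
  have hu4 := eval_ext f3 EQ2 hu.
  have : u \in Z1 by rewrite mem_pmap -hu; exact: map_f.
  by move/f6 => [d hd]; exists d; rewrite eval_cat hu4.
- move=> m0 hm0 hmin d hd x hx.
  have e : m0 = x0 by apply: le_anti; rewrite hmin ?hx0m.
  subst m0; rewrite (tr_eval htf) in hd; case: hd => <-.
  apply: le_lt_trans d4; apply: foldr_max_ge; rewrite inE.
  by rewrite (Ess_sub c1 f1 eP hx) orbT.
exists (nth 0 fsq j); split.
- move=> c dd hc hd.
  have hyd : y <= dd.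
    by have := eval_lt hd (tr_eval htf); rewrite ltNge hx0m //= => /esym/negbT; rewrite -leNgt.
  have fM : eval P4 Q4 (v ++ w1) (last 0 fsq) = Some (last 0 fsq).
    by apply: eval_fix; [rewrite -eM; exact: Good_fixM f1 | exact: Good_fixM f2].
  rewrite -hq2 (lt_le_trans (andP e5).1 (le_trans (ltW (andP e5).2) hyd)) /=.
  by rewrite -(eval_lt hd fM); case/andP: (HE c hc).
- have e4' := act_ext f3 f4 e4; rewrite act_pick /= in e4'.
  have [_ _ _ _ hm] := f2; have := hm _ hj; rewrite hjM -hq2.
  have hzM : z < last 0 fsq by rewrite (lt_trans (andP e5).2 d5).
  have hyM : y < last 0 fsq by rewrite d5.
  clear e4; case: b e1 e4' => _ e4' [hinc|hdec] //.
  + have [_ _ hi] := hdec; have := hi _ (app_in e4').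
    by rewrite /= (andP e5).1 hzM => /(_ isT) h; have := lt_trans h (andP e5).2; rewrite ltxx.
  + have hyz := app_in (app_swap' e4'); have [_ _ hi] := hinc; have := hi _ hyz.
    rewrite /= (lt_trans (andP e5).1 (andP e5).2) hyM => /(_ isT) h.
    by have := lt_trans h (andP e5).2; rewrite ltxx.
Qed.

Definition swg (l : letter) : letter := (if l.1 is gs then gt else gs, l.2).

Lemma act_swg P Q l x : act P Q (swg l) x = act Q P l x.
Proof. by case: l => [[] []]. Qed.

Lemma eval_swap P Q w c : eval P Q (map swg w) c = eval Q P w c.
Proof.
elim: w => [|l w IH] //=; rewrite IH; case: (eval Q P w c) => // u.
exact: act_swg.
Qed.

Lemma reduced_swap w : reduced w -> reduced (map swg w).
Proof.
move=> hr i; rewrite size_map => hi [e1 e2]; apply: (hr i hi).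
have hi' : (i < size w)%N by exact: ltnW.
move: e1 e2; rewrite (set_nth_default (swg (gs, true)) (gs, true)) ?size_map //.
rewrite [nth (gs, true) _ i.+1](set_nth_default (swg (gs, true)) (gs, true)) ?size_map //.
rewrite !(nth_map (gs, true)) //.
case: (nth (gs, true) w i) => [[] b1]; case: (nth (gs, true) w i.+1) => [[] b2] //=.
Qed.

Lemma lib_q p q : elementary p q -> exists p' q' w, liberates_q p q p' q' w.
Proof.
case=> ip iq emin emax hcom.
have eqp : elementary q p.
  split; [exact: iq | exact: ip | by rewrite emin | by rewrite emax |].
  by move=> c h1 h2; rewrite -emin -emax; case: (hcom c h2 h1); [left|right].
have [A [B [w [[hA hB] hr [iA iB] [m1 m2 m3 m4] [b [v [ew [h1 h2 [a [ha1 ha2]]]]]]]]]] := lib_p eqp.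
exists B, A, (map swg w); split => //.
- exact: reduced_swap.
exists b, (map swg v); split; first by rewrite ew.
have memE : forall c, (c \in Ess p ++ Ess q) = (c \in Ess q ++ Ess p).
  by move=> c; rewrite !mem_cat orbC.
split.
- by move=> c; rewrite memE eval_swap; exact: h1.
- move=> m hm hmin d; rewrite eval_swap; apply: h2; first by rewrite -memE.
  by move=> c; rewrite -memE; exact: hmin.
- exists a; split => //.
  by move=> c d; rewrite memE eval_swap; exact: ha1.
Qed.

Theorem lemma3p6 (p q : pisom) :
  elementary p q ->
  (exists (p' q' : pisom) (w : word), liberates_p p q p' q' w) /\
  (exists (p' q' : pisom) (w : word), liberates_q p q p' q' w).
Proof. by move=> h; split; [exact: lib_p | exact: lib_q]. Qed.
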